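(* Let $H=\mathbb{R}^N$ with the Euclidean inner product $(\cdot,\cdot)$. Let $B$ be a symmetric positive definite $N\times N$ matrix, and let $A = A_1 + A_2$ where $A_1, A_2$ are symmetric positive semidefinite $N\times N$ matrices. For a symmetric positive definite matrix $D$ write $\|z\|_D = (Dz,z)^{1/2}$. Let $\sigma \ge 1/2$ and $\tau>0$ be arbitrary, and let $(\varphi^n)_{n\ge 0}\subset \mathbb{R}^N$ be given. Suppose $(y^n)_{n\ge 0}\subset\mathbb{R}^N$ satisfies the factorized scheme \[ (B + \sigma \tau A_1)\, B^{-1}\, (B + \sigma \tau A_2)\, \frac{y^{n+1} - y^{n}}{\tau} + A y^{n} = \varphi^n, \qquad n = 0,1,2,\dots \] Then the scheme is unconditionally stable (i.e., stable for every $\tau>0$), and for every $n\ge 0$, \[ \|(B + \sigma \tau A_2)\, y^{n+1}\|_{B^{-1}} \le \|(B + \sigma \tau A_2)\, y^{n}\|_{B^{-1}} + \tau \|\varphi^n\|_{B^{-1}}. \]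
   Context: This scheme arises as a two-subdomain domain decomposition (regionally additive) time discretization of $B\,\frac{dy}{dt} + Ay = \varphi(t)$, where $B$ is a finite element mass matrix, $A$ the stiffness matrix, and $A_\alpha$ ($\alpha=1,2$) are the stiffness contributions weighted by a partition of unity $\eta_1+\eta_2=1$ subordinate to overlapping subdomains. $\tau$ is the time step and $\sigma$ a weight parameter ($\sigma=1/2$: Peaceman–Rachford type; $\sigma=1$: Douglas–Rachford type). *)

(* Defs.v *)
From HB Require Import structures.
From mathcomp Require Import all_boot all_order all_algebra.
Set Implicit Arguments. Unset Strict Implicit. Unset Printing Implicit Defensive.
Import Order.TTheory GRing.Theory Num.Theory.
Local Open Scope ring_scope.

Definition ip (R : rcfType) (N : nat) (x y : 'cV[R]_N) : R := (x^T *m y) 0 0.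

Definition symmetric_mx (R : rcfType) (N : nat) (D : 'M[R]_N) : Prop := D^T = D.

Definition posdef_mx (R : rcfType) (N : nat) (D : 'M[R]_N) : Prop :=
  symmetric_mx D /\ forall z : 'cV[R]_N, z != 0 -> 0 < ip (D *m z) z.

Definition possemidef_mx (R : rcfType) (N : nat) (D : 'M[R]_N) : Prop :=
  symmetric_mx D /\ forall z : 'cV[R]_N, 0 <= ip (D *m z) z.

Definition mxnorm (R : rcfType) (N : nat) (D : 'M[R]_N) (z : 'cV[R]_N) : R :=
  Num.sqrt (ip (D *m z) z).

(* Main.v *)
Require Import Defs.
From HB Require Import structures.
From mathcomp Require Import all_boot all_order all_algebra.
From mathcomp Require Import ring lra.
Import Order.TTheory GRing.Theory Num.Theory.
Local Open Scope ring_scope.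
Set Implicit Arguments. Unset Strict Implicit.

Section Aux.
Variables (R : rcfType) (N : nat).
Implicit Types (x y z : 'cV[R]_N) (M : 'M[R]_N).

Lemma ipDl x y z : ip (x + y) z = ip x z + ip y z.
Proof. by rewrite /ip linearD /= mulmxDl mxE. Qed.
Lemma ipZl (a : R) x z : ip (a *: x) z = a * ip x z.
Proof. by rewrite /ip linearZ /= -scalemxAl mxE. Qed.
Lemma ipC x y : ip x y = ip y x.
Proof.
rewrite /ip; have -> : x^T *m y = (y^T *m x)^T by rewrite trmx_mul trmxK.
by rewrite mxE.
Qed.
Lemma ipDr x y z : ip z (x + y) = ip z x + ip z y.
Proof. by rewrite ipC ipDl ipC (ipC y). Qed.
Lemma ipZr (a : R) x z : ip z (a *: x) = a * ip z x.
Proof. by rewrite ipC ipZl ipC. Qed.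
Lemma ipNl x z : ip (- x) z = - ip x z.
Proof. by rewrite -scaleN1r ipZl mulN1r. Qed.
Lemma ipMl M x y : ip (M *m x) y = ip x (M^T *m y).
Proof. by rewrite /ip trmx_mul -mulmxA. Qed.
Lemma ip0l x : ip 0 x = 0.
Proof. by rewrite /ip linear0 mul0mx mxE. Qed.

Lemma posdef_unit M : posdef_mx M -> M \in unitmx.
Proof.
case=> Hs Hp; rewrite unitmxE unitfE; apply/negP => /det0P [v v0 Hv].
have : v^T != 0 by apply: contra v0 => /eqP h; rewrite -(trmxK v) h linear0.
move/Hp; have -> : M *m v^T = 0 by rewrite -Hs -trmx_mul Hv linear0.
by rewrite ip0l ltxx.
Qed.

Lemma posdef_ge0 M x : posdef_mx M -> 0 <= ip (M *m x) x.
Proof.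
case=> _ Hp; have [->|nz] := eqVneq x 0; first by rewrite mulmx0 ip0l.
exact: ltW (Hp _ nz).
Qed.
End Aux.

Section Norm.
Variables (R : rcfType) (N : nat) (B : 'M[R]_N).
Hypothesis PB : posdef_mx B.
Local Notation Bi := (invmx B).
Definition Q (x : 'cV[R]_N) := ip (Bi *m x) x.
Definition bb (x y : 'cV[R]_N) := ip (Bi *m x) y.

Lemma Bunit : B \in unitmx. Proof. exact: posdef_unit. Qed.
Lemma BiT : Bi^T = Bi.
Proof. by rewrite trmx_inv; case: PB => -> _. Qed.

Lemma bbC x y : bb x y = bb y x.
Proof. by rewrite /bb ipMl BiT ipC. Qed.

Lemma Q_ge0 x : 0 <= Q x.
Proof.
rewrite /Q; set u := Bi *m x.
have -> : x = B *m u by rewrite /u mulmxA mulmxV ?Bunit // mul1mx.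
by rewrite ipC; apply: posdef_ge0.
Qed.

Lemma Qexp x y (a : R) : Q (x + a *: y) = Q x + 2 * a * bb x y + a ^+ 2 * Q y.
Proof.
rewrite /Q mulmxDr -scalemxAr ipDl ipDr ipDr ipZl !ipZr ipZl.
rewrite -/(bb x y) -/(bb y x) bbC; rewrite /Q; ring.
Qed.

Lemma QZ (a : R) x : Q (a *: x) = a ^+ 2 * Q x.
Proof. by rewrite /Q -scalemxAr ipZl ipZr mulrA expr2. Qed.

Lemma CS x y : bb x y ^+ 2 <= Q x * Q y.
Proof.
have H t := Q_ge0 (x + t *: y).
have hx := Q_ge0 x; have hy := Q_ge0 y.
have [y0|ypos] := eqVneq (Q y) 0.
  rewrite y0 mulr0.
  have [b0|bn0] := eqVneq (bb x y) 0; first by rewrite b0 expr0n.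
  have := H (- (Q x + 1) / (2 * bb x y)); rewrite Qexp y0 mulr0 addr0.
  have -> : 2 * (- (Q x + 1) / (2 * bb x y)) * bb x y = - (Q x + 1).
    by field; rewrite bn0.
  lra.
have yp : 0 < Q y by rewrite lt_def ypos hy.
have := H (- bb x y / Q y); rewrite Qexp.
set t := - bb x y / Q y.
have ht : t * Q y = - bb x y by rewrite /t; field.
nra.
Qed.

Definition nm x := Num.sqrt (Q x).

Lemma nm_tri x y : nm (x + y) <= nm x + nm y.
Proof.
rewrite /nm.
have h0 : 0 <= Num.sqrt (Q x) + Num.sqrt (Q y) by rewrite addr_ge0 ?sqrtr_ge0.
rewrite -(ger0_norm h0) -sqrtr_sqr ler_sqrt ?sqr_ge0 //.
have := Qexp x y 1; rewrite scale1r => ->.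
rewrite sqrrD !sqr_sqrtr ?Q_ge0 //.
have : bb x y <= Num.sqrt (Q x) * Num.sqrt (Q y).
  rewrite -sqrtrM ?Q_ge0 //; apply: le_trans (ler_norm _) _.
  by rewrite -sqrtr_sqr ler_sqrt ?mulr_ge0 ?Q_ge0 ?CS.
rewrite expr1n !mulr1; lra.
Qed.

Lemma nmZ (a : R) x : 0 <= a -> nm (a *: x) = a * nm x.
Proof.
move=> a0; rewrite /nm QZ sqrtrM ?sqr_ge0 // sqrtr_sqr ger0_norm //.
Qed.

Lemma nm_ge0 x : 0 <= nm x. Proof. exact: sqrtr_ge0. Qed.

Lemma nm_le x y : Q x <= Q y -> nm x <= nm y.
Proof. by move=> h; rewrite /nm ler_sqrt ?Q_ge0. Qed.

Lemma Qexp2 (A : 'M[R]_N) (a : R) z : symmetric_mx A ->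
  Q ((B + a *: A) *m z) = ip (B *m z) z + 2 * a * ip (A *m z) z + a ^+ 2 * Q (A *m z).
Proof.
move=> As; rewrite mulmxDl -scalemxAl Qexp; congr (_ + _ + _).
  by rewrite /Q mulmxA mulVmx ?Bunit // mul1mx ipC.
by rewrite /bb mulmxA mulVmx ?Bunit // mul1mx ipC ipMl As.
Qed.
End Norm.

Lemma posdef_add (R : rcfType) (N : nat) (B A : 'M[R]_N) (c : R) :
  posdef_mx B -> possemidef_mx A -> 0 <= c -> posdef_mx (B + c *: A).
Proof.
case=> Bs Bp [As Ap] c0; split.
  by rewrite /symmetric_mx linearD linearZ /= Bs As.
move=> z nz; rewrite mulmxDl -scalemxAl ipDl ipZl.
by apply: ltr_wpDr; [apply: mulr_ge0 | apply: Bp].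
Qed.

Lemma key_id (R : rcfType) (N : nat) (sigma tau c : R)
  (X Z Y1 Y2 Y0 Br V' : 'cV[R]_N) :
  sigma != 0 -> c = sigma * tau ->
  X + c *: Z = Y1 + Y2 -> V' = (Y0 + c *: Y2) + tau *: Br - tau *: X ->
  V' = (1 - (2 * sigma)^-1) *: (Y0 + c *: Y2)
       + (2 * sigma)^-1 *: (Y0 - c *: Y1 - (c *: X - c ^+ 2 *: Z)) + tau *: Br.
Proof.
move=> s0 hc h1 ->; apply/matrixP => i j; move/matrixP/(_ i j): h1.
rewrite !mxE => h1.
rewrite (_ : X i j = Y1 i j + Y2 i j - c * Z i j); last by rewrite -h1; ring.
rewrite hc; field; by rewrite s0.
Qed.

Lemma Q_cmp (R : rcfType) (N : nat) (B A : 'M[R]_N) (c : R) z :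
  posdef_mx B -> possemidef_mx A -> 0 <= c ->
  Q B ((B - c *: A) *m z) <= Q B ((B + c *: A) *m z) /\
  Q B (B *m z) <= Q B ((B + c *: A) *m z).
Proof.
move=> PB [As Ap] c0.
have h1 := Qexp2 PB c z As; have h2 := Qexp2 PB (-c) z As.
have h3 := Qexp2 PB 0 z As.
rewrite scale0r addr0 in h3; rewrite scaleNr in h2.
have p := Ap z; have q := Q_ge0 PB (A *m z).
rewrite h1 h2 h3; split; nra.
Qed.


Theorem mainTheorem1 (R : rcfType) (N : nat)
  (B A1 A2 : 'M[R]_N) (sigma tau : R)
  (phi y : nat -> 'cV[R]_N) :
  posdef_mx B -> possemidef_mx A1 -> possemidef_mx A2 ->
  1 / 2 <= sigma -> 0 < tau ->
  (forall n : nat,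
     (B + (sigma * tau) *: A1) *m invmx B *m (B + (sigma * tau) *: A2)
       *m (tau^-1 *: (y n.+1 - y n))
     + (A1 + A2) *m y n = phi n) ->
  forall n : nat,
    mxnorm (invmx B) ((B + (sigma * tau) *: A2) *m y n.+1)
    <= mxnorm (invmx B) ((B + (sigma * tau) *: A2) *m y n)
       + tau * mxnorm (invmx B) (phi n).
Proof.
move=> PB PA1 PA2 hs ht hyp n.
set c := sigma * tau.
have c0 : 0 < c by rewrite /c mulr_gt0 //; lra.
have s0 : sigma != 0 by apply/eqP; lra.
set C1 := B + c *: A1; set C2 := B + c *: A2.
have PC1 : posdef_mx C1 by apply: posdef_add => //; exact: ltW.
have uC1 := posdef_unit PC1.
have uB := Bunit PB.
set y0 := y n; set y1 := y n.+1.
set v := C2 *m y0; set v' := C2 *m y1.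
set a := (A1 + A2) *m y0.
set w := invmx C1 *m a; set r := invmx C1 *m phi n.
have e1 : C1 *m (invmx B *m (tau^-1 *: (v' - v))) = phi n - a.
  rewrite -(hyp n) addrK /v' /v -mulmxBr scalemxAr !mulmxA //.
have e2 : invmx B *m (tau^-1 *: (v' - v)) = invmx C1 *m (phi n - a).
  by rewrite -e1 mulmxA mulVmx // mul1mx.
have e3 : tau^-1 *: (v' - v) = B *m (r - w).
  by rewrite -[LHS]mul1mx -(mulmxV uB) -mulmxA e2 mulmxBr.
have ev' : v' = v + tau *: (B *m r) - tau *: (B *m w).
  have : tau *: (tau^-1 *: (v' - v)) = v' - v by rewrite scalerA mulfV ?scale1r //; lra.
  rewrite e3 mulmxBr scalerBr => h.
  by rewrite -addrA h addrC subrK.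
have Cw : C1 *m w = a by rewrite /w mulmxA mulmxV // mul1mx.
set q := y0 - c *: w.
have Cq : C1 *m q = (B - c *: A2) *m y0.
  rewrite /q mulmxBr -scalemxAr Cw /a /C1 !mulmxDl -!scalemxAl.
  by rewrite mulNmx -scalemxAl scalerDr opprD addrA addrK.
have Cr : C1 *m r = phi n by rewrite /r mulmxA mulmxV // mul1mx.
have hid : v' = (1 - (2 * sigma)^-1) *: v
   + (2 * sigma)^-1 *: ((B - c *: A1) *m q) + tau *: (B *m r).
  have hv : v = B *m y0 + c *: (A2 *m y0) by rewrite /v /C2 mulmxDl -scalemxAl.
  have hq : (B - c *: A1) *m q =
     B *m y0 - c *: (A1 *m y0) - (c *: (B *m w) - c ^+ 2 *: (A1 *m w)).
    rewrite /q mulmxBl mulmxBr mulmxBr -!scalemxAl -!scalemxAr scalerA -expr2.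
    by apply/matrixP => i j; rewrite !mxE; ring.
  rewrite hq hv; apply: (key_id (X := B *m w) (Z := A1 *m w)) => //.
    by rewrite scalemxAl -mulmxDl -/C1 Cw /a mulmxDl.
  by rewrite ev' hv.
have sp : 0 < (2 * sigma)^-1 by rewrite invr_gt0; lra.
have s1 : 0 <= 1 - (2 * sigma)^-1.
  rewrite subr_ge0 invf_le1; lra.
have [_ hB] := Q_cmp r PB PA1 (ltW c0).
have [hA1 _] := Q_cmp q PB PA1 (ltW c0).
have [hA2 _] := Q_cmp y0 PB PA2 (ltW c0).
rewrite -/C1 in hB hA1; rewrite -/C2 in hA2.
rewrite Cq in hA1; rewrite Cr in hB.
change (nm B v' <= nm B v + tau * nm B (phi n)).
rewrite hid.
apply: le_trans (nm_tri PB _ _) _.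
rewrite (nmZ B _ (ltW ht)).
have := nm_tri PB ((1 - (2 * sigma)^-1) *: v) ((2 * sigma)^-1 *: ((B - c *: A1) *m q)).
rewrite (nmZ B _ s1) (nmZ B _ (ltW sp)).
have n1 := nm_le PB hA1; have n2 := nm_le PB hA2; have n3 := nm_le PB hB.
have := nm_ge0 B v; have := nm_ge0 B (phi n); nra.
Qed.
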